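(* Let $A:\mathbb{R}\to\mathbb{R}^{n\times n}$, $t\mapsto A(t)=(a_{kl}(t))$, be a bounded and piecewise continuous function such that for every $t$ the matrix $A(t)$ is Metzler with zero row sums. Consider the linear system $\dot{x}=A(t)x$. Suppose there exist an index $k\in\{1,\dots,n\}$, a threshold $\delta>0$ and an interval length $T>0$ such that for every $t\in\mathbb{R}$, in the $\delta$-digraph associated to the matrix $\int_t^{t+T}A(s)\,\mathrm{d}s$, every node $l\neq k$ can be reached from node $k$. Then the equilibrium set of consensus states $E=\{x\in\mathbb{R}^n: x_1=\dots=x_n\}$ is uniformly exponentially stable for $\dot{x}=A(t)x$. In particular, all components of any solution $\zeta(t)$ of $\dot{x}=A(t)x$ converge to a common value as $t\to\infty$.
   Context: A real square matrix is Metzler if all its off-diagonal entries are nonnegative; it has zero row sums if each of its rows sums to zero (note that the integral over $[t,t+T]$ of such matrices is again Metzler with zero row sums). For $\delta\ge 0$, the $\delta$-digraph associated to an $n\times n$ Metzler matrix $M=(m_{kl})$ with zero row sums is the directed graph with node set $\{1,\dots,n\}$ having an arc from node $l$ to node $k$ ($k\neq l$) if and only if $m_{kl}>\delta$. A node $l$ can be reached from a node $k\neq l$ if there is a directed path from $k$ to $l$ respecting the orientation of the arcs. Uniform exponential stability of $E$ means: there exist constants $c,\lambda>0$ such that for every $t_0\in\mathbb{R}$ and every solution $\zeta$, $\mathrm{dist}(\zeta(t),E)\le c\,e^{-\lambda(t-t_0)}\mathrm{dist}(\zeta(t_0),E)$ for all $t\ge t_0$. *)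

(* Defs.v *)
From Stdlib Require Import Reals Lra List Relations.
From Coquelicot Require Import Coquelicot.
Open Scope R_scope.

(* Vectors of R^n are represented as functions nat -> R, matrices as
   nat -> nat -> R; only indices < n are ever used. *)

Fixpoint sumR (n : nat) (f : nat -> R) : R :=
  match n with
  | O => 0
  | S m => sumR m f + f m
  end.

Definition bounded_mat (n : nat) (A : R -> nat -> nat -> R) : Prop :=
  exists M : R, forall t k l, (k < n)%nat -> (l < n)%nat -> Rabs (A t k l) <= M.

Definition piecewise_continuous (n : nat) (A : R -> nat -> nat -> R) : Prop :=
  forall a b : R, exists D : list R,
    forall t, a <= t <= b -> forall k l, (k < n)%nat -> (l < n)%nat ->
      (~ In t D -> continuous (fun s => A s k l) t) /\
      (In t D ->
         (exists v, filterlim (fun s => A s k l) (at_left t) (locally v)) /\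
         (exists v, filterlim (fun s => A s k l) (at_right t) (locally v))).

Definition metzler_zero_row_sums (n : nat) (M : nat -> nat -> R) : Prop :=
  (forall k l, (k < n)%nat -> (l < n)%nat -> k <> l -> 0 <= M k l) /\
  (forall k, (k < n)%nat -> sumR n (fun l => M k l) = 0).

(* arc from node l to node k in the delta-digraph of M *)
Definition delta_arc (n : nat) (delta : R) (M : nat -> nat -> R) (l k : nat) : Prop :=
  (l < n)%nat /\ (k < n)%nat /\ k <> l /\ M k l > delta.

Definition reachable (n : nat) (delta : R) (M : nat -> nat -> R) (k l : nat) : Prop :=
  clos_trans nat (delta_arc n delta M) k l.

Definition int_mat (A : R -> nat -> nat -> R) (t T : R) : nat -> nat -> R :=
  fun k l => RInt (fun s => A s k l) t (t + T).

Definition matvec (n : nat) (M : nat -> nat -> R) (x : nat -> R) (i : nat) : R :=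
  sumR n (fun j => M i j * x j).

(* zeta is a (Caratheodory) solution of x' = A(t) x on [t0, +oo) *)
Definition is_solution_from (n : nat) (A : R -> nat -> nat -> R) (t0 : R)
    (zeta : R -> nat -> R) : Prop :=
  forall t, t0 <= t -> forall i, (i < n)%nat ->
    ex_RInt (fun s => matvec n (A s) (zeta s) i) t0 t /\
    zeta t i = zeta t0 i + RInt (fun s => matvec n (A s) (zeta s) i) t0 t.

Definition dist_E (n : nat) (x : nat -> R) : R :=
  real (Glb_Rbar (fun r => exists c : R,
           r = sqrt (sumR n (fun i => (x i - c) ^ 2)))).

Definition unif_exp_stable_E (n : nat) (A : R -> nat -> nat -> R) : Prop :=
  exists c lam : R, 0 < c /\ 0 < lam /\
    forall (t0 : R) (zeta : R -> nat -> R), is_solution_from n A t0 zeta ->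
      forall t, t0 <= t ->
        dist_E n (zeta t) <= c * exp (- lam * (t - t0)) * dist_E n (zeta t0).

(* Main.v *)
Require Import Defs.
From Stdlib Require Import Reals Relations Lra Lia List Classical ZArith.
From Coquelicot Require Import Coquelicot.
Open Scope R_scope.

Lemma sumR_ext n f g : (forall j, (j < n)%nat -> f j = g j) -> sumR n f = sumR n g.
Proof. induction n; intros H; simpl; auto. rewrite IHn; [rewrite H|]; auto. Qed.

Lemma sumR_plus n f g : sumR n (fun j => f j + g j) = sumR n f + sumR n g.
Proof. induction n; simpl; [lra|]. rewrite IHn; lra. Qed.

Lemma sumR_scal n c f : sumR n (fun j => c * f j) = c * sumR n f.
Proof. induction n; simpl; [lra|]. rewrite IHn; lra. Qed.

Lemma sumR_const n c : sumR n (fun _ => c) = INR n * c.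
Proof. induction n; simpl sumR; [simpl; lra|]. rewrite IHn, S_INR; lra. Qed.

Lemma sumR_le n f g : (forall j, (j < n)%nat -> f j <= g j) -> sumR n f <= sumR n g.
Proof. induction n; intros H; simpl; [lra|]. apply Rplus_le_compat; auto. Qed.

Lemma sumR_ind n l v : (l < n)%nat ->
  sumR n (fun j => if Nat.eq_dec j l then v else 0) = v.
Proof.
  induction n; intros H; [lia|]. simpl.
  destruct (Nat.eq_dec n l).
  - subst. rewrite (sumR_ext _ _ (fun _ => 0)). rewrite sumR_const; lra.
    intros j Hj. destruct (Nat.eq_dec j l); [lia|auto].
  - rewrite IHn; [lra|lia].
Qed.

Definition hypA (n : nat) (A : R -> nat -> nat -> R) (L : R) : Prop :=
  0 <= L /\ (forall t i j, (i < n)%nat -> (j < n)%nat -> Rabs (A t i j) <= L) /\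
  (forall t, metzler_zero_row_sums n (A t)).

Lemma matvec_diff n A L s x i : hypA n A L -> (i < n)%nat ->
  matvec n (A s) x i = sumR n (fun j => A s i j * (x j - x i)).
Proof.
  intros [HL [Hb HM]] Hi. unfold matvec.
  destruct (HM s) as [_ Hr].
  assert (E: sumR n (fun j => A s i j * (x j - x i)) =
     sumR n (fun j => A s i j * x j) + (- x i) * sumR n (fun j => A s i j)).
  { rewrite <- sumR_scal, <- sumR_plus. apply sumR_ext; intros; ring. }
  rewrite E, Hr; auto. ring.
Qed.

Lemma entry_bounds n A L s i j : hypA n A L -> (i < n)%nat -> (j < n)%nat -> i <> j ->
  0 <= A s i j <= L.
Proof.
  intros [HL [Hb HM]] Hi Hj Hij. destruct (HM s) as [Hm _].
  split. apply Hm; auto. specialize (Hb s i j Hi Hj).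
  apply Rabs_le_between in Hb. lra.
Qed.

Lemma f_lower n A L s x i eta : hypA n A L -> (i < n)%nat -> 0 <= eta ->
  (forall j, (j < n)%nat -> x j - x i >= - eta) ->
  matvec n (A s) x i >= - (INR n * L) * eta.
Proof.
  intros H Hi He Hx. rewrite (matvec_diff n A L); auto.
  assert (HL : 0 <= L) by apply H.
  apply Rle_ge. replace (- (INR n * L) * eta) with (sumR n (fun _ => - L * eta))
    by (rewrite sumR_const; ring).
  apply sumR_le. intros j Hj. destruct (Nat.eq_dec i j).
  - subst. replace (x j - x j) with 0 by ring. nra.
  - destruct (entry_bounds n A L s i j H Hi Hj n0). specialize (Hx j Hj). nra.
Qed.

Lemma f_upper n A L s x i eta : hypA n A L -> (i < n)%nat -> 0 <= eta ->
  (forall j, (j < n)%nat -> x j - x i <= eta) ->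
  matvec n (A s) x i <= (INR n * L) * eta.
Proof.
  intros H Hi He Hx. rewrite (matvec_diff n A L); auto.
  assert (HL : 0 <= L) by apply H.
  replace ((INR n * L) * eta) with (sumR n (fun _ => L * eta))
    by (rewrite sumR_const; ring).
  apply sumR_le. intros j Hj. destruct (Nat.eq_dec i j).
  - subst. replace (x j - x j) with 0 by ring. nra.
  - destruct (entry_bounds n A L s i j H Hi Hj n0). specialize (Hx j Hj). nra.
Qed.

Lemma f_lift n A L s x i l eta al : hypA n A L -> (i < n)%nat -> (l < n)%nat -> l <> i ->
  0 <= eta -> 0 <= al ->
  (forall j, (j < n)%nat -> x j - x i >= - eta) -> x l - x i >= al ->
  matvec n (A s) x i >= A s i l * al - (INR n * L) * eta.
Proof.
  intros H Hi Hl Hli He Ha Hx Hxl. rewrite (matvec_diff n A L); auto.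
  assert (HL : 0 <= L) by apply H.
  apply Rle_ge.
  replace (A s i l * al - (INR n * L) * eta) with
    (sumR n (fun j => - L * eta + (if Nat.eq_dec j l then A s i l * al else 0))).
  2:{ rewrite sumR_plus, sumR_const, sumR_ind; auto; ring. }
  apply sumR_le. intros j Hj. destruct (Nat.eq_dec i j).
  - subst. destruct (Nat.eq_dec j l); [lia|]. replace (x j - x j) with 0 by ring. nra.
  - destruct (entry_bounds n A L s i j H Hi Hj n0). specialize (Hx j Hj).
    destruct (Nat.eq_dec j l).
    + subst. nra.
    + nra.
Qed.


Definition fI n (A : R -> nat -> nat -> R) (x : R -> nat -> R) i := fun s => matvec n (A s) (x s) i.

Lemma sol_int n A t0 x p q i : is_solution_from n A t0 x -> t0 <= p <= q -> (i < n)%nat ->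
  ex_RInt (fI n A x i) p q /\ x q i - x p i = RInt (fI n A x i) p q.
Proof.
  intros H Hpq Hi.
  destruct (H q ltac:(lra) i Hi) as [Eq Xq].
  destruct (H p ltac:(lra) i Hi) as [Ep Xp].
  assert (Epq : ex_RInt (fI n A x i) p q).
  { apply (@ex_RInt_Chasles_2 R_CompleteNormedModule (fI n A x i) t0 p q); [lra|exact Eq]. }
  split; auto.
  rewrite Xq, Xp. fold (fI n A x i). rewrite <- (@RInt_Chasles R_CompleteNormedModule (fI n A x i) t0 p q); auto.
  unfold fI. change plus with Rplus. ring.
Qed.

Lemma int_low n A L t0 x p q i eta : hypA n A L -> is_solution_from n A t0 x ->
  t0 <= p <= q -> (i < n)%nat -> 0 <= eta ->
  (forall u, p <= u <= q -> forall j, (j < n)%nat -> x u j - x u i >= - eta) ->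
  x q i - x p i >= - (INR n * L) * eta * (q - p).
Proof.
  intros HA H Hpq Hi He Hx. destruct (sol_int n A t0 x p q i H Hpq Hi) as [Ex Eq].
  rewrite Eq. apply Rle_ge.
  assert (R1 := RInt_le (fun _ => - (INR n * L) * eta) (fI n A x i) p q ltac:(lra)
    (ex_RInt_const _ _ _) Ex).
  rewrite RInt_const in R1. change scal with Rmult in R1.
  replace (- (INR n * L) * eta * (q - p)) with ((q - p) * (- (INR n * L) * eta)) by ring.
  apply R1. intros u Hu. unfold fI. apply Rge_le. apply (f_lower n A L); auto.
  apply Hx. lra.
Qed.

Lemma int_up n A L t0 x p q i eta : hypA n A L -> is_solution_from n A t0 x ->
  t0 <= p <= q -> (i < n)%nat -> 0 <= eta ->
  (forall u, p <= u <= q -> forall j, (j < n)%nat -> x u j - x u i <= eta) ->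
  x q i - x p i <= (INR n * L) * eta * (q - p).
Proof.
  intros HA H Hpq Hi He Hx. destruct (sol_int n A t0 x p q i H Hpq Hi) as [Ex Eq].
  rewrite Eq.
  assert (R1 := RInt_le (fI n A x i) (fun _ => (INR n * L) * eta) p q ltac:(lra)
    Ex (ex_RInt_const _ _ _)).
  rewrite RInt_const in R1. change scal with Rmult in R1.
  replace ((INR n * L) * eta * (q - p)) with ((q - p) * ((INR n * L) * eta)) by ring.
  apply R1. intros u Hu. unfold fI. apply (f_upper n A L); auto.
  apply Hx. lra.
Qed.

Lemma int_lift n A L t0 x p q i l eta al : hypA n A L -> is_solution_from n A t0 x ->
  t0 <= p <= q -> (i < n)%nat -> (l < n)%nat -> l <> i -> 0 <= eta -> 0 <= al ->
  ex_RInt (fun s => A s i l) p q ->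
  (forall u, p <= u <= q -> forall j, (j < n)%nat -> x u j - x u i >= - eta) ->
  (forall u, p <= u <= q -> x u l - x u i >= al) ->
  x q i - x p i >= al * RInt (fun s => A s i l) p q - (INR n * L) * eta * (q - p).
Proof.
  intros HA H Hpq Hi Hl Hli He Ha Eil Hx Hxl.
  destruct (sol_int n A t0 x p q i H Hpq Hi) as [Ex Eq].
  rewrite Eq. apply Rle_ge.
  set (g := fun s => A s i l * al - (INR n * L) * eta).
  assert (I1 : is_RInt (V:=R_NormedModule) (fun s => A s i l) p q (RInt (fun s => A s i l) p q))
    by (apply (@RInt_correct R_CompleteNormedModule); auto).
  assert (I2 := @is_RInt_scal R_NormedModule _ p q al _ I1).
  assert (I3 := @is_RInt_const R_NormedModule p q ((INR n * L) * eta)).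
  assert (I4 := @is_RInt_minus R_NormedModule _ _ p q _ _ I2 I3).
  assert (Ig : is_RInt (V:=R_NormedModule) g p q (al * RInt (fun s => A s i l) p q - (INR n * L) * eta * (q - p))).
  { assert (E : al * RInt (fun s => A s i l) p q - (INR n * L) * eta * (q - p) =
      Rminus (Rmult al (RInt (fun s => A s i l) p q)) (Rmult (q - p) ((INR n * L) * eta))) by ring.
    rewrite E. clear E.
    refine (@is_RInt_ext R_NormedModule _ g p q _ _ I4).
    intros s _. unfold g. change minus with Rminus. change scal with Rmult. rewrite (Rmult_comm al). reflexivity. }
  apply (is_RInt_le g (fI n A x i) p q _ _ ltac:(lra) Ig (RInt_correct _ _ _ Ex)).
  intros u Hu. unfold g, fI. apply Rge_le. apply (f_lift n A L); auto.
  apply Hx; lra. apply Hxl; lra.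
Qed.

Lemma fin_bound n (P : nat -> R -> Prop) :
  (forall i K K', K <= K' -> P i K -> P i K') ->
  (forall i, (i < n)%nat -> exists K, P i K) -> exists K, 0 <= K /\ forall i, (i < n)%nat -> P i K.
Proof.
  intros Hm. induction n; intros H.
  - exists 0. split; [lra|]. intros; lia.
  - destruct IHn as [K [HK HK']]. intros; apply H; lia.
    destruct (H n ltac:(lia)) as [K2 HK2].
    exists (Rmax K K2). split. apply (Rle_trans _ K); [lra|apply Rmax_l].
    intros i Hi. destruct (Nat.eq_dec i n).
    + subst. apply (Hm _ K2); auto. apply Rmax_r.
    + apply (Hm _ K); [apply Rmax_l|]. apply HK'; lia.
Qed.

Lemma lipschitz n A t0 x s : is_solution_from n A t0 x -> t0 <= s ->
  exists K, 0 <= K /\ forall i, (i < n)%nat -> forall p q, t0 <= p <= q -> q <= s ->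
    Rabs (x q i - x p i) <= K * (q - p).
Proof.
  intros H Hs.
  destruct (fin_bound n (fun i K => forall u, t0 <= u <= s -> Rabs (fI n A x i u) <= K))
    as [K [HK HK']].
  { intros i K K' HKK' HP u Hu. apply (Rle_trans _ K); auto. }
  { intros i Hi. destruct (H s Hs i Hi) as [E _].
    destruct (ex_RInt_ub _ _ _ E) as [M HM]. exists M. intros u Hu.
    apply HM. rewrite Rmin_left, Rmax_right; lra. }
  exists K. split; auto. intros i Hi p q Hpq Hq.
  destruct (sol_int n A t0 x p q i H ltac:(lra) Hi) as [Ex Eq]. rewrite Eq.
  rewrite Rmult_comm. apply abs_RInt_le_const; auto. lra.
  intros u Hu. apply HK'; auto; lra.
Qed.

Lemma sol_opp n A t0 x : is_solution_from n A t0 x ->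
  is_solution_from n A t0 (fun t j => - x t j).
Proof.
  intros H t Ht i Hi. destruct (H t Ht i Hi) as [E X].
  assert (Eq : forall s, matvec n (A s) (fun j => - x s j) i = opp (matvec n (A s) (x s) i)).
  { intros s. unfold matvec. change opp with Ropp.
    rewrite (sumR_ext _ _ (fun j => -1 * (A s i j * x s j))).
    2: intros; ring. rewrite sumR_scal. ring. }
  assert (E' : ex_RInt (V:=R_CompleteNormedModule) (fun s => opp (matvec n (A s) (x s) i)) t0 t)
    by (apply (@ex_RInt_opp R_CompleteNormedModule); exact E).
  split.
  - refine (@ex_RInt_ext R_CompleteNormedModule _ _ t0 t _ E').
    intros; rewrite Eq; auto.
  - rewrite (@RInt_ext R_CompleteNormedModule _ (fun s => opp (matvec n (A s) (x s) i))).
    2: intros; apply Eq. rewrite (@RInt_opp R_CompleteNormedModule); auto. rewrite X. change opp with Ropp. ring.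
Qed.


Definition lipK n (x : R -> nat -> R) t0 S K :=
  forall i, (i < n)%nat -> forall p q, t0 <= p <= q -> q <= S -> Rabs (x q i - x p i) <= K * (q - p).

Lemma lipK_bounds n x t0 S K i p q : lipK n x t0 S K -> (i < n)%nat -> t0 <= p <= q -> q <= S ->
  x p i - K * (q - p) <= x q i <= x p i + K * (q - p).
Proof. intros H Hi Hp Hq. specialize (H i Hi p q Hp Hq). apply Rabs_le_between in H. lra. Qed.

Lemma min_step n A L t0 x S K u0 h m' : hypA n A L -> is_solution_from n A t0 x ->
  t0 <= u0 -> 0 <= h -> u0 + h <= S -> INR n * L * h <= 1 -> 0 <= K -> lipK n x t0 S K ->
  (forall j, (j < n)%nat -> x u0 j >= m') ->
  forall i, (i < n)%nat -> x (u0 + h) i >= m' - 2 * (INR n * L) * K * h ^ 2.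
Proof.
  intros HA H Hu0 Hh HS Hch HK Hl Hm i Hi.
  assert (Hc : 0 <= INR n * L) by (destruct HA; apply Rmult_le_pos; [apply pos_INR|auto]).
  set (eta := x u0 i - m' + 2 * K * h).
  assert (He : 0 <= eta) by (unfold eta; specialize (Hm i Hi); nra).
  assert (Hlow := int_low n A L t0 x u0 (u0 + h) i eta HA H ltac:(lra) Hi He).
  assert (X : x (u0 + h) i - x u0 i >= - (INR n * L) * eta * (u0 + h - u0)).
  { apply Hlow. intros u Hu j Hj.
    destruct (lipK_bounds n x t0 S K j u0 u Hl Hj ltac:(lra) ltac:(lra)).
    destruct (lipK_bounds n x t0 S K i u0 u Hl Hi ltac:(lra) ltac:(lra)).
    specialize (Hm j Hj). unfold eta. nra. }
  replace (u0 + h - u0) with h in X by ring. unfold eta in X.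
  specialize (Hm i Hi).
  assert (0 <= (1 - INR n * L * h) * (x u0 i - m')) by (apply Rmult_le_pos; lra).
  nra.
Qed.

Lemma min_iter n A L t0 x S K a h m : hypA n A L -> is_solution_from n A t0 x ->
  t0 <= a -> 0 <= h -> INR n * L * h <= 1 -> 0 <= K -> lipK n x t0 S K ->
  (forall j, (j < n)%nat -> x a j >= m) ->
  forall k : nat, a + INR k * h <= S ->
  forall j, (j < n)%nat -> x (a + INR k * h) j >= m - INR k * (2 * (INR n * L) * K * h ^ 2).
Proof.
  intros HA H Ha Hh Hch HK Hl Hm k. induction k; intros Hk j Hj.
  - simpl. replace (a + 0 * h) with a by ring. specialize (Hm j Hj). lra.
  - rewrite S_INR in *.
    assert (Hk' : a + INR k * h <= S) by (assert (0 <= INR k) by apply pos_INR; nra).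
    replace (a + (INR k + 1) * h) with ((a + INR k * h) + h) by ring.
    assert (0 <= INR k) by apply pos_INR.
    assert (X := min_step n A L t0 x S K (a + INR k * h) h (m - INR k * (2 * (INR n * L) * K * h ^ 2))
      HA H ltac:(nra) Hh ltac:(lra) Hch HK Hl ltac:(intros; apply IHk; auto) j Hj).
    lra.
Qed.

Lemma arch_nat (r : R) : exists N : nat, r < INR N.
Proof.
  destruct (Rle_lt_dec r 0).
  - exists 1%nat. simpl. lra.
  - destruct (archimed r) as [H1 H2]. exists (Z.to_nat (up r)).
    rewrite INR_IZR_INZ. rewrite Z2Nat.id. lra.
    apply le_IZR. lra.
Qed.

Lemma min_inv n A L t0 x a s m : hypA n A L -> is_solution_from n A t0 x ->
  t0 <= a <= s -> (forall j, (j < n)%nat -> x a j >= m) ->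
  forall j, (j < n)%nat -> x s j >= m.
Proof.
  intros HA H Has Hm j Hj.
  assert (Hc : 0 <= INR n * L) by (destruct HA; apply Rmult_le_pos; [apply pos_INR|auto]).
  destruct (Rge_dec (x s j) m) as [|Hlt]; auto. exfalso.
  apply Rnot_ge_lt in Hlt. set (d := m - x s j).
  destruct (lipschitz n A t0 x s H ltac:(lra)) as [K [HK Hl]].
  set (tau := s - a). set (E := 2 * (INR n * L) * K).
  assert (HE : 0 <= E) by (unfold E; nra).
  assert (Ht : 0 <= tau) by (unfold tau; lra).
  destruct (arch_nat (INR n * L * tau + E * tau * tau / d + 1)) as [N HN].
  assert (Hd : 0 < d) by (unfold d; lra).
  assert (HEd : 0 <= E * tau * tau / d) by (apply Rmult_le_pos; [nra| left; apply Rinv_0_lt_compat; lra]).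
  assert (HN0 : 0 < INR N) by nra.
  set (h := tau / INR N).
  assert (Hh : INR N * h = tau) by (unfold h; field; lra).
  assert (Hh0 : 0 <= h) by (unfold h; apply Rmult_le_pos; [lra| left; apply Rinv_0_lt_compat; lra]).
  assert (Hch : INR n * L * h <= 1).
  { apply (Rmult_le_reg_l (INR N)); auto. rewrite Rmult_1_r.
    replace (INR N * (INR n * L * h)) with (INR n * L * (INR N * h)) by ring. rewrite Hh. nra. }
  assert (Hmi := min_iter n A L t0 x s K a h m HA H ltac:(lra) Hh0 Hch HK Hl Hm N
    ltac:(rewrite Hh; unfold tau; lra) j Hj).
  rewrite Hh in Hmi. replace (a + tau) with s in Hmi by (unfold tau; ring).
  fold E in Hmi.
  assert (HNd : E * tau * tau < d * INR N).
  { assert (0 <= INR n * L * tau) by nra. assert (HH : E * tau * tau / d < INR N) by lra.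
    apply (Rmult_lt_compat_l d) in HH; auto. replace (d * (E * tau * tau / d)) with (E * tau * tau) in HH by (field; lra). lra. }
  assert (INR N * (E * h ^ 2) = E * tau * h) by (rewrite <- Hh; ring).
  assert (E * tau * h * INR N = E * tau * tau) by (rewrite <- Hh; ring).
  assert (E * tau * h < d).
  { apply (Rmult_lt_reg_r (INR N)); auto. nra. }
  unfold d in *. nra.
Qed.

Lemma max_inv n A L t0 x a s M : hypA n A L -> is_solution_from n A t0 x ->
  t0 <= a <= s -> (forall j, (j < n)%nat -> x a j <= M) ->
  forall j, (j < n)%nat -> x s j <= M.
Proof.
  intros HA H Has Hm j Hj.
  assert (X := min_inv n A L t0 (fun t j => - x t j) a s (- M) HA (sol_opp n A t0 x H) Has).
  simpl in X. assert (X' := X ltac:(intros j' Hj'; specialize (Hm j' Hj'); lra) j Hj). lra.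
Qed.


Lemma cpos n L : 0 <= L -> 0 <= INR n * L.
Proof. intros; apply Rmult_le_pos; [apply pos_INR|auto]. Qed.

Lemma dec_step n A L t0 x S K u0 h m i : hypA n A L -> is_solution_from n A t0 x ->
  t0 <= u0 -> 0 <= h -> u0 + h <= S -> 0 <= K -> lipK n x t0 S K -> (i < n)%nat ->
  (forall u, u0 <= u <= u0 + h -> forall j, (j < n)%nat -> x u j >= m) ->
  x (u0 + h) i - m >= (1 - INR n * L * h) * (x u0 i - m) - INR n * L * K * h ^ 2.
Proof.
  intros HA H Hu0 Hh HS HK Hl Hi Hm.
  assert (Hc := cpos n L (proj1 HA)).
  assert (Hy : x u0 i >= m) by (apply Hm; auto; lra).
  set (eta := x u0 i - m + K * h).
  assert (He : 0 <= eta) by (unfold eta; nra).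
  assert (X : x (u0 + h) i - x u0 i >= - (INR n * L) * eta * (u0 + h - u0)).
  { apply (int_low n A L t0); auto; try lra. intros u Hu j Hj.
    destruct (lipK_bounds n x t0 S K i u0 u Hl Hi ltac:(lra) ltac:(lra)).
    specialize (Hm u Hu j Hj). unfold eta. nra. }
  replace (u0 + h - u0) with h in X by ring. unfold eta in X. nra.
Qed.

Lemma dec_iter n A L t0 x S K a h m i : hypA n A L -> is_solution_from n A t0 x ->
  t0 <= a -> 0 <= h -> INR n * L * h <= 1 -> 0 <= K -> lipK n x t0 S K -> (i < n)%nat ->
  (forall u, a <= u -> forall j, (j < n)%nat -> x u j >= m) ->
  forall k : nat, a + INR k * h <= S ->
  x (a + INR k * h) i - m >= (1 - INR n * L * h) ^ k * (x a i - m) - INR k * (INR n * L * K * h ^ 2).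
Proof.
  intros HA H Ha Hh Hch HK Hl Hi G k.
  assert (Hc := cpos n L (proj1 HA)).
  induction k; intros Hk.
  - simpl. replace (a + 0 * h) with a by ring. lra.
  - rewrite S_INR in *.
    assert (H0 : 0 <= INR k) by apply pos_INR.
    assert (Hk' : a + INR k * h <= S) by nra.
    specialize (IHk Hk').
    replace (a + (INR k + 1) * h) with ((a + INR k * h) + h) by ring.
    assert (X := dec_step n A L t0 x S K (a + INR k * h) h m i HA H ltac:(nra) Hh ltac:(lra) HK Hl Hi
      ltac:(intros u Hu; apply G; nra)).
    simpl pow.
    assert (0 <= INR k * (INR n * L * K * h ^ 2)) by (apply Rmult_le_pos; auto; apply Rmult_le_pos; [nra|apply pow2_ge_0]).
    assert (0 <= 1 - INR n * L * h) by lra.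
    assert (0 <= INR n * L * K * h ^ 2) by (apply Rmult_le_pos; [nra|apply pow2_ge_0]).
    assert (Y : (1 - INR n * L * h) * (x (a + INR k * h) i - m) >=
       (1 - INR n * L * h) * ((1 - INR n * L * h) ^ k * (x a i - m) - INR k * (INR n * L * K * h ^ 2))).
    { apply Rle_ge, Rmult_le_compat_l; lra. }
    assert ((1 - INR n * L * h) * (INR k * (INR n * L * K * h ^ 2)) <= INR k * (INR n * L * K * h ^ 2)).
    { assert (INR n * L * h * (INR k * (INR n * L * K * h ^ 2)) >= 0) by (apply Rle_ge, Rmult_le_pos; nra). nra. }
    nra.
Qed.

Lemma bernoulli (z : R) (N : nat) : 0 <= z <= 1 -> (1 - z) ^ N >= 1 - INR N * z.
Proof.
  intros Hz. induction N.
  - simpl. lra.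
  - rewrite S_INR. simpl pow. assert (0 <= INR N) by apply pos_INR.
    assert (0 <= (1 - z) ^ N) by (apply pow_le; lra).
    nra.
Qed.

Lemma dec0 n A L t0 x a m i tau : hypA n A L -> is_solution_from n A t0 x ->
  t0 <= a -> (i < n)%nat -> 0 <= tau -> INR n * L * tau <= 1 ->
  (forall u, a <= u -> forall j, (j < n)%nat -> x u j >= m) ->
  x (a + tau) i - m >= (1 - INR n * L * tau) * (x a i - m).
Proof.
  intros HA H Ha Hi Ht Hct G.
  assert (Hc := cpos n L (proj1 HA)).
  assert (Hy : x a i >= m) by (apply G; auto; lra).
  destruct (Rge_dec (x (a + tau) i - m) ((1 - INR n * L * tau) * (x a i - m))) as [|Hlt]; auto.
  exfalso. apply Rnot_ge_lt in Hlt.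
  set (d := (1 - INR n * L * tau) * (x a i - m) - (x (a + tau) i - m)).
  assert (Hd : 0 < d) by (unfold d; lra).
  destruct (lipschitz n A t0 x (a + tau) H ltac:(lra)) as [K [HK Hl]].
  set (E := INR n * L * K).
  assert (HE : 0 <= E) by (unfold E; nra).
  destruct (arch_nat (INR n * L * tau + E * tau * tau / d + 1)) as [N HN].
  assert (HEd : 0 <= E * tau * tau / d) by (apply Rmult_le_pos; [nra| left; apply Rinv_0_lt_compat; lra]).
  assert (0 <= INR n * L * tau) by nra.
  assert (HN0 : 0 < INR N) by nra.
  set (h := tau / INR N).
  assert (Hh : INR N * h = tau) by (unfold h; field; lra).
  assert (Hh0 : 0 <= h) by (unfold h; apply Rmult_le_pos; [lra| left; apply Rinv_0_lt_compat; lra]).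
  assert (Hch : INR n * L * h <= 1).
  { apply (Rmult_le_reg_l (INR N)); auto. rewrite Rmult_1_r.
    replace (INR N * (INR n * L * h)) with (INR n * L * (INR N * h)) by ring. rewrite Hh. nra. }
  assert (X := dec_iter n A L t0 x (a + tau) K a h m i HA H Ha Hh0 Hch HK Hl Hi G N ltac:(rewrite Hh; lra)).
  rewrite Hh in X.
  assert (B := bernoulli (INR n * L * h) N ltac:(split; nra)).
  assert (INR N * (INR n * L * h) = INR n * L * tau) by (rewrite <- Hh; ring).
  assert (B2 : (1 - INR n * L * h) ^ N * (x a i - m) >= (1 - INR n * L * tau) * (x a i - m)).
  { apply Rle_ge, Rmult_le_compat_r; lra. }
  assert (HNd : E * tau * tau < d * INR N).
  { assert (HH : E * tau * tau / d < INR N) by lra.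
    apply (Rmult_lt_compat_l d) in HH; auto. replace (d * (E * tau * tau / d)) with (E * tau * tau) in HH by (field; lra). lra. }
  assert (INR N * (E * h ^ 2) = E * tau * h) by (rewrite <- Hh; ring).
  assert (E * tau * h * INR N = E * tau * tau) by (rewrite <- Hh; ring).
  assert (E * tau * h < d).
  { apply (Rmult_lt_reg_r (INR N)); auto. nra. }
  fold E in X. unfold d in *. nra.
Qed.

Lemma decay_k n A L t0 x a m i h0 : hypA n A L -> is_solution_from n A t0 x ->
  t0 <= a -> (i < n)%nat -> 0 < h0 -> INR n * L * h0 <= 1/2 ->
  (forall u, a <= u -> forall j, (j < n)%nat -> x u j >= m) ->
  forall k : nat, forall s, a <= s <= a + INR k * h0 -> x s i - m >= (1/2) ^ k * (x a i - m).
Proof.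
  intros HA H Ha Hi Hh0 Hch G.
  assert (Hc := cpos n L (proj1 HA)).
  assert (Hy : x a i >= m) by (apply G; auto; lra).
  induction k; intros s Hs.
  - simpl in *. replace s with a by lra. lra.
  - rewrite S_INR in Hs. assert (0 <= INR k) by apply pos_INR.
    assert (0 <= (1/2) ^ k) by (apply pow_le; lra).
    simpl pow.
    destruct (Rle_dec s (a + INR k * h0)).
    + assert (X := IHk s ltac:(lra)). nra.
    + set (a' := a + INR k * h0). set (tau := s - a').
      assert (X := dec0 n A L t0 x a' m i tau HA H ltac:(unfold a'; nra) Hi ltac:(unfold tau, a' in *; lra)
        ltac:(unfold tau, a' in *; nra) ltac:(intros u Hu; apply G; unfold a' in *; nra)).
      replace (a' + tau) with s in X by (unfold tau; ring).
      assert (Y := IHk a' ltac:(unfold a'; nra)).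
      assert (INR n * L * tau <= 1/2) by (unfold tau, a' in *; nra).
      assert (x a' i - m >= 0) by (apply Rle_ge; apply (Rle_trans _ ((1/2)^k * (x a i - m))); nra).
      nra.
Qed.


Lemma ballR (x : R) (e : R) y : (Rabs (y - x) < e) -> @ball R_UniformSpace x e y.
Proof. intros H. exact H. Qed.
Lemma ballR' (x : R) (e : R) y : @ball R_UniformSpace x e y -> (Rabs (y - x) < e).
Proof. intros H. exact H. Qed.

Lemma ex_RInt_base (f : R -> R) a b va vb : a < b ->
  (forall z, a < z < b -> continuous f z) ->
  filterlim f (at_right a) (locally va) -> filterlim f (at_left b) (locally vb) ->
  ex_RInt f a b.
Proof.
  intros Hab Hc Ha Hb.
  set (g := fun z => if Rle_dec z a then va else if Rle_dec b z then vb else f z).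
  apply (@ex_RInt_ext R_NormedModule g).
  { intros z Hz. rewrite Rmin_left, Rmax_right in Hz by lra. unfold g.
    destruct (Rle_dec z a); [lra|]. destruct (Rle_dec b z); [lra|]. auto. }
  apply (@ex_RInt_continuous R_CompleteNormedModule).
  rewrite Rmin_left, Rmax_right by lra. intros z Hz.
  destruct (Req_dec z a) as [->|Hza]; [|destruct (Req_dec z b) as [->|Hzb]].
  - unfold continuous. replace (g a) with va by (unfold g; destruct (Rle_dec a a); lra).
    apply filterlim_locally. intros eps.
    destruct (proj1 (filterlim_locally (F := at_right a) f va) Ha eps) as [d Hd].
    assert (Hd' : 0 < Rmin d (b - a)) by (apply Rmin_pos; [apply cond_pos|lra]).
    exists (mkposreal _ Hd'). intros y Hy. apply ballR' in Hy. simpl in Hy.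
    unfold g. destruct (Rle_dec y a). apply ball_center.
    destruct (Rle_dec b y).
    { exfalso. assert (Rmin d (b - a) <= b - a) by apply Rmin_r. apply Rabs_lt_between in Hy. lra. }
    apply Hd. apply ballR. assert (Rmin d (b - a) <= d) by apply Rmin_l. lra. lra.
  - unfold continuous. replace (g b) with vb by (unfold g; destruct (Rle_dec b a); [lra|]; destruct (Rle_dec b b); lra).
    apply filterlim_locally. intros eps.
    destruct (proj1 (filterlim_locally (F := at_left b) f vb) Hb eps) as [d Hd].
    assert (Hd' : 0 < Rmin d (b - a)) by (apply Rmin_pos; [apply cond_pos|lra]).
    exists (mkposreal _ Hd'). intros y Hy. apply ballR' in Hy. simpl in Hy.
    unfold g. destruct (Rle_dec y a).
    { exfalso. assert (Rmin d (b - a) <= b - a) by apply Rmin_r. apply Rabs_lt_between in Hy. lra. }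
    destruct (Rle_dec b y). apply ball_center.
    apply Hd. apply ballR. assert (Rmin d (b - a) <= d) by apply Rmin_l. lra. lra.
  - assert (Hz' : a < z < b) by lra.
    refine (continuous_ext_loc g f z _ (Hc z Hz')).
    assert (Hd' : 0 < Rmin (z - a) (b - z)) by (apply Rmin_pos; lra).
    exists (mkposreal _ Hd'). intros y Hy. apply ballR' in Hy. simpl in Hy.
    assert (Rmin (z - a) (b - z) <= z - a) by apply Rmin_l.
    assert (Rmin (z - a) (b - z) <= b - z) by apply Rmin_r.
    apply Rabs_lt_between in Hy.
    unfold g. destruct (Rle_dec y a); [lra|]. destruct (Rle_dec b y); [lra|]. auto.
Qed.

Lemma pc_int_gen (f : R -> R) : forall N (D : list R) a b, (length D <= N)%nat -> a <= b ->
  (forall t, a < t < b -> (~ In t D -> continuous f t) /\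
     (In t D -> (exists v, filterlim f (at_left t) (locally v)) /\
                (exists v, filterlim f (at_right t) (locally v)))) ->
  (exists v, filterlim f (at_right a) (locally v)) ->
  (exists v, filterlim f (at_left b) (locally v)) -> ex_RInt f a b.
Proof.
  induction N; intros D a b HN Hab H Ha Hb.
  - destruct (Req_dec a b) as [->|Hne]. apply ex_RInt_point.
    destruct Ha as [va Ha]. destruct Hb as [vb Hb].
    apply (ex_RInt_base f a b va vb); auto. lra.
    intros z Hz. apply (H z Hz). destruct D; simpl in *; [auto|lia].
  - destruct (Req_dec a b) as [->|Hne]. apply ex_RInt_point.
    destruct (classic (exists d, In d D /\ a < d < b)) as [[d [HdD Hd]]|Hno].
    + set (D' := remove Req_dec_T d D).
      assert (HD' : (length D' <= N)%nat) by (assert (X := remove_length_lt Req_dec_T D d HdD); unfold D'; lia).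
      destruct (H d Hd) as [_ [Hl Hr]]; auto.
      assert (Hsub : forall a' b', a <= a' -> b' <= b -> (forall t, a' < t < b' -> t <> d) ->
        forall t, a' < t < b' -> (~ In t D' -> continuous f t) /\
     (In t D' -> (exists v, filterlim f (at_left t) (locally v)) /\
                (exists v, filterlim f (at_right t) (locally v)))).
      { intros a' b' Ha' Hb' Hnd t Ht. destruct (H t ltac:(lra)) as [H1 H2]. split.
        - intros Hn. apply H1. intros Hin. apply Hn. unfold D'. apply in_in_remove; auto.
        - intros Hin. apply H2. apply (in_remove Req_dec_T D t d Hin). }
      apply (@ex_RInt_Chasles R_NormedModule f a d b).
      * apply (IHN D' a d); auto. lra. apply Hsub; try lra. intros; lra.
      * apply (IHN D' d b); auto. lra. apply Hsub; try lra. intros; lra.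
    + destruct Ha as [va Ha]. destruct Hb as [vb Hb].
      apply (ex_RInt_base f a b va vb); auto. lra.
      intros z Hz. apply (H z Hz). intros Hin. apply Hno. exists z; auto.
Qed.

Lemma cont_right (f : R -> R) a : continuous f a -> exists v, filterlim f (at_right a) (locally v).
Proof. intros H. exists (f a). eapply filterlim_filter_le_1; [apply filter_le_within|exact H]. Qed.
Lemma cont_left (f : R -> R) a : continuous f a -> exists v, filterlim f (at_left a) (locally v).
Proof. intros H. exists (f a). eapply filterlim_filter_le_1; [apply filter_le_within|exact H]. Qed.

Lemma pc_int n A i j a b : piecewise_continuous n A -> (i < n)%nat -> (j < n)%nat -> a <= b ->
  ex_RInt (fun s => A s i j) a b.
Proof.
  intros Hpc Hi Hj Hab. destruct (Hpc a b) as [D HD].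
  apply (pc_int_gen _ (length D) D a b); auto.
  - intros t Ht. apply HD; auto. lra.
  - destruct (classic (In a D)).
    + apply (HD a ltac:(lra) i j Hi Hj); auto.
    + apply cont_right. apply (HD a ltac:(lra) i j Hi Hj); auto.
  - destruct (classic (In b D)).
    + apply (HD b ltac:(lra) i j Hi Hj); auto.
    + apply cont_left. apply (HD b ltac:(lra) i j Hi Hj); auto.
Qed.


Lemma pow_le1 (x : R) (N : nat) : 0 <= x <= 1 -> x ^ N <= 1.
Proof. intros Hx. induction N; simpl; [lra|]. assert (0 <= x ^ N) by (apply pow_le; lra). nra. Qed.

Definition cst_ok n L delta T r h0 (NT : nat) :=
  0 < r /\ r <= 1/2 /\ r <= delta / 2 /\ r * (delta + INR n * L * T) <= delta / 2 /\
  0 < h0 /\ INR n * L * h0 <= 1/2 /\ T <= INR NT * h0.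

Lemma lift_step n A L t0 x p m i l delta T r h0 NT beta :
  hypA n A L -> is_solution_from n A t0 x -> cst_ok n L delta T r h0 NT -> 0 < T -> 0 < delta ->
  t0 <= p -> (i < n)%nat -> (l < n)%nat -> l <> i ->
  (forall u, p <= u -> forall j, (j < n)%nat -> x u j >= m) ->
  ex_RInt (fun s => A s i l) p (p + T) ->
  RInt (fun s => A s i l) p (p + T) > delta -> 0 <= beta ->
  (forall u, p <= u <= p + T -> x u l - m >= beta) ->
  x (p + T) i - m >= r * (1/2) ^ NT * beta.
Proof.
  intros HA H [Hr1 [Hr2 [Hr3 [Hr4 [Hh1 [Hh2 Hh3]]]]]] HT Hd Hp Hi Hl Hli G Eil Hint Hb Hxl.
  assert (Hc := cpos n L (proj1 HA)).
  assert (Hpow : 0 < (1/2) ^ NT <= 1).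
  { split. apply pow_lt; lra. apply pow_le1; lra. }
  set (rho := beta * r).
  destruct (classic (exists u, p <= u <= p + T /\ x u i - m > rho)) as [[u [Hu Hxu]]|Hno].
  - assert (X := decay_k n A L t0 x u m i h0 HA H ltac:(lra) Hi Hh1 Hh2
       ltac:(intros u' Hu'; apply G; lra) NT (p + T) ltac:(lra)).
    unfold rho in Hxu.
    assert ((1/2) ^ NT * (x u i - m) >= (1/2) ^ NT * (beta * r)) by (apply Rle_ge, Rmult_le_compat_l; lra).
    nra.
  - assert (Hle : forall u, p <= u <= p + T -> x u i - m <= rho).
    { intros u Hu. apply Rnot_gt_le. intros Hc'. apply Hno. exists u; auto. }
    assert (Hrho : 0 <= rho) by (unfold rho; nra).
    assert (Hbr : 0 <= beta - rho) by (unfold rho; nra).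
    assert (X := int_lift n A L t0 x p (p + T) i l rho (beta - rho) HA H ltac:(lra) Hi Hl Hli Hrho Hbr Eil
      ltac:(intros u Hu j Hj; specialize (G u ltac:(lra) j Hj); specialize (Hle u Hu); lra)
      ltac:(intros u Hu; specialize (Hxl u Hu); specialize (Hle u Hu); lra)).
    replace (p + T - p) with T in X by ring.
    assert (Gp : x p i >= m) by (apply G; auto; lra).
    assert ((beta - rho) * RInt (fun s => A s i l) p (p + T) >= (beta - rho) * delta).
    { apply Rle_ge, Rmult_le_compat_l; lra. }
    assert (E1 : rho * (delta + INR n * L * T) <= beta * (delta / 2)).
    { unfold rho. replace (beta * r * (delta + INR n * L * T)) with (beta * (r * (delta + INR n * L * T))) by ring.
      apply Rmult_le_compat_l; lra. }
    assert (E2 : r * (1/2) ^ NT * beta <= beta * (delta / 2)).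
    { replace (r * (1/2) ^ NT * beta) with (beta * (r * (1/2) ^ NT)) by ring.
      apply Rmult_le_compat_l; auto. nra. }
    nra.
Qed.

Lemma cut_lemma (R0 : nat -> nat -> Prop) (P : nat -> Prop) k l :
  clos_trans nat R0 k l -> P k -> ~ P l -> exists j i, R0 j i /\ P j /\ ~ P i.
Proof.
  induction 1; intros Hx Hy.
  - exists x, y; auto.
  - destruct (classic (P y)).
    + apply IHclos_trans2; auto.
    + apply IHclos_trans1; auto.
Qed.

Lemma nodup_full n (Ls : list nat) : NoDup Ls -> (forall j, In j Ls -> (j < n)%nat) ->
  (n <= length Ls)%nat -> forall j, (j < n)%nat -> In j Ls.
Proof.
  intros HN HS Hl j Hj. apply NNPP. intros Hn.
  assert (X := @NoDup_incl_length nat (j :: Ls) (seq 0 n) (NoDup_cons j Hn HN)).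
  rewrite length_seq in X. simpl in X.
  assert ((S (length Ls) <= n)%nat). apply X.
  intros z Hz. apply in_seq. destruct Hz as [<-|Hz]; [lia|]. specialize (HS z Hz). lia.
  lia.
Qed.

Lemma contr_half n A L t0 x k delta T r h0 NT a m M :
  hypA n A L -> is_solution_from n A t0 x -> piecewise_continuous n A ->
  cst_ok n L delta T r h0 NT -> 0 < T -> 0 < delta -> (k < n)%nat ->
  (forall t : R, forall l, (l < n)%nat -> l <> k -> reachable n delta (int_mat A t T) k l) ->
  t0 <= a -> (forall j, (j < n)%nat -> m <= x a j <= M) -> x a k >= (m + M) / 2 ->
  forall j, (j < n)%nat ->
    x (a + INR n * T) j - m >= (1/2) * (r * (1/2) ^ NT * (1/2) ^ NT) ^ n * (M - m).
Proof.
  intros HA H Hpc Hcst HT Hd Hk Hreach Ha Hb Hxk.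
  assert (Hcst' := Hcst). destruct Hcst' as [Hr1 [Hr2 [Hr3 [Hr4 [Hh1 [Hh2 Hh3]]]]]].
  assert (Hc := cpos n L (proj1 HA)).
  assert (HmM : m <= M) by (destruct (Hb k Hk); lra).
  assert (G : forall u, a <= u -> forall j, (j < n)%nat -> x u j >= m).
  { intros u Hu. apply (min_inv n A L t0 x a u m HA H ltac:(lra)). intros j Hj; destruct (Hb j Hj); lra. }
  set (rho0 := r * (1/2) ^ NT * (1/2) ^ NT).
  assert (Hpow : 0 < (1/2) ^ NT <= 1) by (split; [apply pow_lt; lra| apply pow_le1; lra]).
  assert (Hrho0 : 0 < rho0) by (unfold rho0; apply Rmult_lt_0_compat; [apply Rmult_lt_0_compat|]; lra).
  assert (Inv : forall p : nat, exists Ls, NoDup Ls /\ In k Ls /\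
     (forall j, In j Ls -> (j < n)%nat /\ x (a + INR p * T) j - m >= (1/2) * rho0 ^ p * (M - m)) /\
     ((p + 1 <= length Ls)%nat \/ forall j, (j < n)%nat -> In j Ls)).
  { induction p.
    - exists (k :: nil). split. constructor; [auto|constructor]. split. left; auto. split.
      + intros j [<-|[]]. split; auto. simpl. replace (a + 0 * T) with a by ring. lra.
      + left. simpl. lia.
    - destruct IHp as [Ls [HN [HkS [HS Hlen]]]].
      set (w := a + INR p * T).
      assert (Hw : t0 <= w) by (unfold w; assert (0 <= INR p) by apply pos_INR; nra).
      assert (Hw' : a <= w) by (unfold w; assert (0 <= INR p) by apply pos_INR; nra).
      assert (HwT : a + INR (S p) * T = w + T) by (unfold w; rewrite S_INR; ring).
      set (beta := (1/2) ^ NT * ((1/2) * rho0 ^ p * (M - m))).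
      assert (Hbeta : 0 <= beta).
      { unfold beta. apply Rmult_le_pos; [lra|]. apply Rmult_le_pos; [|lra]. apply Rmult_le_pos; [lra|].
        apply pow_le; lra. }
      assert (Old : forall j, In j Ls -> forall u, w <= u <= w + T -> x u j - m >= beta).
      { intros j Hj u Hu. destruct (HS j Hj) as [Hjn Hjv]. fold w in Hjv.
        assert (X := decay_k n A L t0 x w m j h0 HA H Hw Hjn Hh1 Hh2
          ltac:(intros u' Hu'; apply G; lra) NT u ltac:(lra)).
        unfold beta. apply Rle_ge. apply (Rle_trans _ ((1/2) ^ NT * (x w j - m))); [|lra].
        apply Rmult_le_compat_l; lra. }
      assert (Hgb : (1/2) * rho0 ^ S p * (M - m) = r * (1/2) ^ NT * beta).
      { unfold beta, rho0. simpl pow. ring. }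
      assert (Hgb2 : r * (1/2) ^ NT * beta <= beta).
      { assert (r * (1/2) ^ NT <= 1) by nra. nra. }
      rewrite HwT.
      destruct (classic (forall j, (j < n)%nat -> In j Ls)) as [Hall|Hnall].
      + exists Ls. split; auto. split; auto. split; [|right; auto].
        intros j Hj. destruct (HS j Hj) as [Hjn _]. split; auto.
        rewrite Hgb. specialize (Old j Hj (w + T) ltac:(lra)). lra.
      + apply not_all_ex_not in Hnall. destruct Hnall as [l Hl].
        apply imply_to_and in Hl. destruct Hl as [Hln HlS].
        assert (Hlk : l <> k) by (intros ->; auto).
        destruct (cut_lemma _ (fun j => In j Ls) k l (Hreach w l Hln Hlk) HkS HlS)
          as [j [i [[Hjn [Hin [Hij Harc]]] [HjS HiS]]]].
        unfold int_mat in Harc.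
        assert (Xi := lift_step n A L t0 x w m i j delta T r h0 NT beta HA H Hcst HT Hd Hw Hin Hjn
          ltac:(auto) ltac:(intros u Hu; apply G; lra) (pc_int n A i j w (w + T) Hpc Hin Hjn ltac:(lra))
          ltac:(lra) Hbeta (Old j HjS)).
        exists (i :: Ls). split. constructor; auto. split. right; auto. split.
        * intros z [<-|Hz].
          { split; auto. rewrite Hgb. auto. }
          { destruct (HS z Hz) as [Hzn _]. split; auto. rewrite Hgb.
            specialize (Old z Hz (w + T) ltac:(lra)). lra. }
        * destruct Hlen as [Hlen|Hlen]; [left; simpl; lia|].
          exfalso. apply HlS. apply Hlen; auto. }
  destruct (Inv n) as [Ls [HN [HkS [HS Hlen]]]].
  intros j Hj.
  assert (HjS : In j Ls).
  { destruct Hlen as [Hlen|Hlen]; [|apply Hlen; auto].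
    apply (nodup_full n Ls HN); [intros z Hz; apply HS; auto|lia|auto]. }
  apply HS. auto.
Qed.


Lemma contr_full n A L t0 x k delta T r h0 NT a m M :
  hypA n A L -> is_solution_from n A t0 x -> piecewise_continuous n A ->
  cst_ok n L delta T r h0 NT -> 0 < T -> 0 < delta -> (k < n)%nat ->
  (forall t : R, forall l, (l < n)%nat -> l <> k -> reachable n delta (int_mat A t T) k l) ->
  t0 <= a -> (forall j, (j < n)%nat -> m <= x a j <= M) ->
  exists m' M', m <= m' /\ M' <= M /\
    M' - m' <= (1 - (1/2) * (r * (1/2) ^ NT * (1/2) ^ NT) ^ n) * (M - m) /\
    forall j, (j < n)%nat -> m' <= x (a + INR n * T) j <= M'.
Proof.
  intros HA H Hpc Hcst HT Hd Hk Hreach Ha Hb.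
  set (g := (1/2) * (r * (1/2) ^ NT * (1/2) ^ NT) ^ n).
  assert (HW : a <= a + INR n * T) by (assert (0 <= INR n) by apply pos_INR; nra).
  destruct (Rge_dec (x a k) ((m + M) / 2)) as [Hge|Hlt].
  - assert (X := contr_half n A L t0 x k delta T r h0 NT a m M HA H Hpc Hcst HT Hd Hk Hreach Ha Hb Hge).
    exists (m + g * (M - m)), M. fold g in X.
    assert (HmM : m <= M) by (destruct (Hb k Hk); lra).
    assert (0 <= g).
    { unfold g. apply Rmult_le_pos; [lra|]. apply pow_le. destruct Hcst as [Hr _].
      assert (0 < (1/2) ^ NT) by (apply pow_lt; lra). nra. }
    assert (0 <= g * (M - m)) by (apply Rmult_le_pos; lra).
    split; [lra|]. split; [lra|]. split; [right; ring|].
    intros j Hj. split. specialize (X j Hj). lra.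
    apply (max_inv n A L t0 x a (a + INR n * T) M HA H ltac:(lra)); auto. intros j' Hj'; apply Hb; auto.
  - apply Rnot_ge_lt in Hlt.
    assert (X := contr_half n A L t0 (fun t j => - x t j) k delta T r h0 NT a (- M) (- m) HA
      (sol_opp n A t0 x H) Hpc Hcst HT Hd Hk Hreach Ha
      ltac:(intros j Hj; specialize (Hb j Hj); simpl; lra) ltac:(simpl; lra)).
    simpl in X. fold g in X.
    exists m, (M - g * (M - m)).
    assert (HmM : m <= M) by (destruct (Hb k Hk); lra).
    assert (0 <= g).
    { unfold g. apply Rmult_le_pos; [lra|]. apply pow_le. destruct Hcst as [Hr _].
      assert (0 < (1/2) ^ NT) by (apply pow_lt; lra). nra. }
    assert (0 <= g * (M - m)) by (apply Rmult_le_pos; lra).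
    split; [lra|]. split; [lra|]. split; [right; ring|].
    intros j Hj. split.
    apply Rge_le. apply (min_inv n A L t0 x a (a + INR n * T) m HA H ltac:(lra)); auto. intros j' Hj'; specialize (Hb j' Hj'); lra.
    specialize (X j Hj). lra.
Qed.

Lemma iter_contr n A L t0 x k delta T r h0 NT a m M :
  hypA n A L -> is_solution_from n A t0 x -> piecewise_continuous n A ->
  cst_ok n L delta T r h0 NT -> 0 < T -> 0 < delta -> (k < n)%nat ->
  (forall t : R, forall l, (l < n)%nat -> l <> k -> reachable n delta (int_mat A t T) k l) ->
  t0 <= a -> (forall j, (j < n)%nat -> m <= x a j <= M) ->
  forall q : nat, exists m' M', m <= m' /\ M' <= M /\
    M' - m' <= (1 - (1/2) * (r * (1/2) ^ NT * (1/2) ^ NT) ^ n) ^ q * (M - m) /\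
    forall s, a + INR q * (INR n * T) <= s -> forall j, (j < n)%nat -> m' <= x s j <= M'.
Proof.
  intros HA H Hpc Hcst HT Hd Hk Hreach Ha Hb.
  set (g := (1/2) * (r * (1/2) ^ NT * (1/2) ^ NT) ^ n).
  assert (Hg : 0 <= g <= 1).
  { destruct Hcst as [Hr1 [Hr2 _]]. assert (0 < (1/2) ^ NT <= 1) by (split; [apply pow_lt; lra|apply pow_le1; lra]).
    assert (0 <= r * (1/2) ^ NT * (1/2) ^ NT <= 1) by (split; nra).
    assert (0 <= (r * (1/2) ^ NT * (1/2) ^ NT) ^ n <= 1) by (split; [apply pow_le; lra|apply pow_le1; lra]).
    unfold g; lra. }
  assert (HW : 0 <= INR n * T) by (assert (0 <= INR n) by apply pos_INR; nra).
  induction q.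
  - exists m, M. split; [lra|]. split; [lra|]. split; [simpl; lra|].
    intros s Hs j Hj. simpl in Hs. split.
    + apply Rge_le. apply (min_inv n A L t0 x a s m HA H ltac:(lra)); auto. intros j' Hj'; specialize (Hb j' Hj'); lra.
    + apply (max_inv n A L t0 x a s M HA H ltac:(lra)); auto. intros j' Hj'; apply Hb; auto.
  - destruct IHq as [m1 [M1 [H1 [H2 [H3 H4]]]]].
    assert (0 <= INR q) by apply pos_INR.
    set (a1 := a + INR q * (INR n * T)).
    destruct (contr_full n A L t0 x k delta T r h0 NT a1 m1 M1 HA H Hpc Hcst HT Hd Hk Hreach
      ltac:(unfold a1; nra) ltac:(intros j Hj; apply H4; [unfold a1; lra|auto]))
      as [m2 [M2 [G1 [G2 [G3 G4]]]]].
    fold g in G3.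
    exists m2, M2. split; [lra|]. split; [lra|]. split.
    + simpl pow. fold g. eapply Rle_trans. apply G3. replace ((1 - g) * (1 - g) ^ q * (M - m)) with ((1 - g) * ((1 - g) ^ q * (M - m))) by ring. apply Rmult_le_compat_l; lra.
    + intros s Hs j Hj. rewrite S_INR in Hs.
      split.
      * apply Rge_le. apply (min_inv n A L t0 x (a1 + INR n * T) s m2 HA H).
        unfold a1; nra. intros j' Hj'; apply Rle_ge; apply G4; auto. auto.
      * apply (max_inv n A L t0 x (a1 + INR n * T) s M2 HA H).
        unfold a1; nra. intros j' Hj'; apply G4; auto. auto.
Qed.


Lemma sumR_ge_term n f j : (forall i, (i < n)%nat -> 0 <= f i) -> (j < n)%nat -> f j <= sumR n f.
Proof.
  induction n; intros H Hj; [lia|]. simpl.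
  assert (0 <= sumR n f).
  { replace 0 with (sumR n (fun _ => 0)) by (rewrite sumR_const; ring). apply sumR_le; intros; apply H; lia. }
  destruct (Nat.eq_dec j n) as [->|Hne].
  - lra.
  - assert (f j <= sumR n f) by (apply IHn; [intros; apply H; lia|lia]). assert (0 <= f n) by (apply H; lia). lra.
Qed.

Definition distset n (v : nat -> R) := fun r => exists c : R, r = sqrt (sumR n (fun i => (v i - c) ^ 2)).

Lemma dist_bounds n (v : nat -> R) j1 j2 : (j1 < n)%nat -> (j2 < n)%nat ->
  (Rabs (v j2 - v j1)) / 2 <= dist_E n v /\ forall c, dist_E n v <= sqrt (sumR n (fun i => (v i - c) ^ 2)).
Proof.
  intros H1 H2.
  assert (Hlb : forall c, Rabs (v j2 - v j1) / 2 <= sqrt (sumR n (fun i => (v i - c) ^ 2))).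
  { intros c. assert (Hp : forall i, (i < n)%nat -> 0 <= (v i - c) ^ 2) by (intros; apply pow2_ge_0).
    assert (A1 : Rabs (v j1 - c) <= sqrt (sumR n (fun i => (v i - c) ^ 2))).
    { rewrite <- (sqrt_pow2 (Rabs (v j1 - c))) by apply Rabs_pos. apply sqrt_le_1_alt. rewrite pow2_abs.
      apply (sumR_ge_term n (fun i => (v i - c) ^ 2)); auto. }
    assert (A2 : Rabs (v j2 - c) <= sqrt (sumR n (fun i => (v i - c) ^ 2))).
    { rewrite <- (sqrt_pow2 (Rabs (v j2 - c))) by apply Rabs_pos. apply sqrt_le_1_alt. rewrite pow2_abs.
      apply (sumR_ge_term n (fun i => (v i - c) ^ 2)); auto. }
    assert (Rabs (v j2 - v j1) <= Rabs (v j2 - c) + Rabs (v j1 - c)).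
    { replace (v j2 - v j1) with ((v j2 - c) + - (v j1 - c)) by ring.
      eapply Rle_trans. apply Rabs_triang. rewrite Rabs_Ropp. lra. }
    lra. }
  destruct (Glb_Rbar_correct (distset n v)) as [Hl Hg].
  assert (E1 : Rbar_le (Rabs (v j2 - v j1) / 2) (Glb_Rbar (distset n v))).
  { apply Hg. intros r [c ->]. apply Hlb. }
  assert (E2 : forall c, Rbar_le (Glb_Rbar (distset n v)) (sqrt (sumR n (fun i => (v i - c) ^ 2)))).
  { intros c. apply Hl. exists c; auto. }
  unfold dist_E. fold (distset n v).
  specialize (E2 0).
  destruct (Glb_Rbar (distset n v)) as [l| |] eqn:El; simpl in *; try contradiction.
  split; auto. intros c. specialize (Hl (sqrt (sumR n (fun i => (v i - c) ^ 2)))).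
  apply Hl. exists c; auto.
Qed.

Lemma sqrt_sum_bound n (v : nat -> R) c d : 0 <= d -> (forall i, (i < n)%nat -> Rabs (v i - c) <= d) ->
  sqrt (sumR n (fun i => (v i - c) ^ 2)) <= sqrt (INR n) * d.
Proof.
  intros Hd H. rewrite <- (sqrt_pow2 d) by auto. rewrite <- sqrt_mult_alt by apply pos_INR.
  apply sqrt_le_1_alt. rewrite <- sumR_const. apply sumR_le. intros i Hi.
  rewrite <- pow2_abs. specialize (H i Hi). assert (0 <= Rabs (v i - c)) by apply Rabs_pos. nra.
Qed.

Lemma fin_minmax n (v : nat -> R) : (0 < n)%nat -> exists j1 j2, (j1 < n)%nat /\ (j2 < n)%nat /\
  forall j, (j < n)%nat -> v j1 <= v j <= v j2.
Proof.
  induction n; intros Hn; [lia|].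
  destruct (Nat.eq_dec n 0) as [->|Hn0].
  - exists 0%nat, 0%nat. split; [lia|split; [lia|]]. intros z Hz; replace z with 0%nat by lia; lra.
  - destruct IHn as [j1 [j2 [H1 [H2 H3]]]]; [lia|].
    exists (if Rle_dec (v j1) (v n) then j1 else n), (if Rle_dec (v n) (v j2) then j2 else n).
    split; [|split].
    + destruct (Rle_dec _ _); lia.
    + destruct (Rle_dec _ _); lia.
    + intros j Hj. split.
    * destruct (Nat.eq_dec j n) as [->|]; destruct (Rle_dec (v j1) (v n)); try lra.
      specialize (H3 j ltac:(lia)); lra. specialize (H3 j ltac:(lia)); lra.
    * destruct (Nat.eq_dec j n) as [->|]; destruct (Rle_dec (v n) (v j2)); try lra.
      specialize (H3 j ltac:(lia)); lra. specialize (H3 j ltac:(lia)); lra.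
Qed.

Lemma exp_mono x y : x <= y -> exp x <= exp y.
Proof. intros [H|H]. left; apply exp_increasing; auto. subst; lra. Qed.

Lemma exp_pow_nat a (q : nat) : exp a ^ q = exp (INR q * a).
Proof. induction q. simpl. rewrite Rmult_0_l, exp_0; auto. rewrite S_INR. simpl pow. rewrite IHq.
  rewrite <- exp_plus. f_equal; ring. Qed.


Definition iterP n (x : R -> nat -> R) t0 g W :=
  forall a m M, t0 <= a -> (forall j, (j < n)%nat -> m <= x a j <= M) ->
  forall q : nat, exists m' M', m <= m' /\ M' <= M /\ M' - m' <= (1 - g) ^ q * (M - m) /\
    forall s, a + INR q * W <= s -> forall j, (j < n)%nat -> m' <= x s j <= M'.

Lemma conv_lemma n x t0 g W : (0 < n)%nat -> 0 < g <= 1 -> 0 < W -> iterP n x t0 g W ->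
  exists v : R, forall i, (i < n)%nat ->
       filterlim (fun t => x t i) (Rbar_locally p_infty) (locally v).
Proof.
  intros Hn Hg HW Hit.
  destruct (fin_minmax n (x t0) Hn) as [j1 [j2 [Hj1 [Hj2 Hmm]]]].
  set (m0 := x t0 j1). set (M0 := x t0 j2).
  assert (Hb0 : forall j, (j < n)%nat -> m0 <= x t0 j <= M0) by (intros; apply Hmm; auto).
  assert (HmM : m0 <= M0) by (destruct (Hb0 j1 Hj1); lra).
  destruct (Hit t0 m0 M0 (Rle_refl _) Hb0 0%nat) as [ma [Ma [Ha1 [Ha2 [_ Ha4]]]]].
  set (E := fun r => exists s, t0 <= s /\ forall u, s <= u -> forall j, (j < n)%nat -> r <= x u j).
  assert (HE : bound E).
  { exists M0. intros r [s [Hs Hr]]. specialize (Hr s (Rle_refl _) j1 Hj1).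
    destruct (Ha4 s ltac:(simpl; lra) j1 Hj1). lra. }
  assert (HE2 : exists r, E r).
  { exists m0, t0. split; [lra|]. intros u Hu j Hj. destruct (Ha4 u ltac:(simpl; lra) j Hj). lra. }
  destruct (completeness E HE HE2) as [v [Hv1 Hv2]].
  exists v. intros i Hi.
  apply (proj2 (filterlim_locally _ _)). intros eps.
  assert (Hy : 0 < eps / (M0 - m0 + 1)) by (apply Rdiv_lt_0_compat; [apply cond_pos|lra]).
  destruct (pow_lt_1_zero (1 - g) ltac:(rewrite Rabs_right; lra) _ Hy) as [N HN].
  specialize (HN N (le_n _)). rewrite Rabs_right in HN by (apply Rle_ge, pow_le; lra).
  destruct (Hit t0 m0 M0 (Rle_refl _) Hb0 N) as [m' [M' [H1 [H2 [H3 H4]]]]].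
  assert (0 <= INR N) by apply pos_INR.
  assert (Hm' : m' <= v).
  { apply Hv1. exists (t0 + INR N * W). split; [nra|]. intros u Hu j Hj. apply (H4 u Hu j Hj). }
  assert (HM' : v <= M').
  { apply Hv2. intros r [s [Hs Hr]]. set (u := Rmax s (t0 + INR N * W)).
    specialize (Hr u (Rmax_l _ _) j1 Hj1). destruct (H4 u (Rmax_r _ _) j1 Hj1). lra. }
  assert (Hsmall : M' - m' < eps).
  { assert (0 <= (1 - g) ^ N) by (apply pow_le; lra).
    assert ((1 - g) ^ N * (M0 - m0 + 1) < eps).
    { apply (Rmult_lt_compat_r (M0 - m0 + 1)) in HN; [|lra].
      unfold Rdiv in HN. rewrite Rmult_assoc, Rinv_l in HN by lra. lra. }
    nra. }
  exists (t0 + INR N * W). intros u Hu. apply ballR.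
  destruct (H4 u ltac:(lra) i Hi). apply Rabs_lt_between. lra.
Qed.

Lemma stab_lemma n x t0 g W : (0 < n)%nat -> 0 < g <= 1 -> 0 < W -> iterP n x t0 g W ->
  forall t, t0 <= t ->
  dist_E n (x t) <= (2 * sqrt (INR n) * exp g) * exp (- (g / W) * (t - t0)) * dist_E n (x t0).
Proof.
  intros Hn Hg HW Hit t Ht.
  destruct (fin_minmax n (x t0) Hn) as [j1 [j2 [Hj1 [Hj2 Hmm]]]].
  set (m0 := x t0 j1). set (M0 := x t0 j2).
  assert (Hb0 : forall j, (j < n)%nat -> m0 <= x t0 j <= M0) by (intros; apply Hmm; auto).
  assert (HmM : m0 <= M0) by (destruct (Hb0 j1 Hj1); lra).
  destruct (nfloor_ex ((t - t0) / W) ltac:(apply Rmult_le_pos; [lra|left; apply Rinv_0_lt_compat; lra]))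
    as [q [Hq1 Hq2]].
  destruct (Hit t0 m0 M0 (Rle_refl _) Hb0 q) as [m' [M' [H1 [H2 [H3 H4]]]]].
  assert (HqW : t0 + INR q * W <= t).
  { apply (Rmult_le_compat_r W) in Hq1; [|lra]. unfold Rdiv in Hq1.
    rewrite Rmult_assoc, Rinv_l in Hq1 by lra. lra. }
  assert (Hb : forall j, (j < n)%nat -> m' <= x t j <= M') by (apply H4; auto).
  assert (Hd : 0 <= M' - m') by (destruct (Hb j1 Hj1); lra).
  destruct (dist_bounds n (x t) j1 j2 Hj1 Hj2) as [_ Hup].
  destruct (dist_bounds n (x t0) j1 j2 Hj1 Hj2) as [Hlow _].
  assert (D1 : dist_E n (x t) <= sqrt (INR n) * (M' - m')).
  { eapply Rle_trans. apply (Hup m'). apply sqrt_sum_bound; auto.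
    intros i Hi. destruct (Hb i Hi). rewrite Rabs_right; lra. }
  assert (D2 : M0 - m0 <= 2 * dist_E n (x t0)).
  { fold m0 M0 in Hlow. rewrite Rabs_right in Hlow by lra. lra. }
  assert (P1 : (1 - g) ^ q <= exp (- g) ^ q).
  { apply pow_incr. split; [lra|]. assert (X := exp_ineq1 (- g) ltac:(lra)). lra. }
  rewrite exp_pow_nat in P1.
  assert (P2 : exp (INR q * - g) <= exp g * exp (- (g / W) * (t - t0))).
  { rewrite <- exp_plus. apply exp_mono.
    assert (g / W * (t - t0) = g * ((t - t0) / W)) by (unfold Rdiv; ring).
    assert (g * ((t - t0) / W) <= g * (INR q + 1)) by (apply Rmult_le_compat_l; lra).
    nra. }
  assert (Hs : 0 <= sqrt (INR n)) by apply sqrt_pos.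
  assert (He : 0 < exp (- (g / W) * (t - t0))) by apply exp_pos.
  assert (Heg : 0 < exp g) by apply exp_pos.
  assert (0 <= dist_E n (x t0)) by (assert (0 <= M0 - m0) by lra; lra).
  assert (0 <= (1 - g) ^ q) by (apply pow_le; lra).
  eapply Rle_trans. apply D1. apply Rmult_le_compat_l with (r := sqrt (INR n)) in H3; auto.
  eapply Rle_trans. apply H3.
  assert (Y : (1 - g) ^ q * (M0 - m0) <= (exp g * exp (- (g / W) * (t - t0))) * (2 * dist_E n (x t0))).
  { apply Rmult_le_compat; try lra. }
  replace (2 * sqrt (INR n) * exp g * exp (- (g / W) * (t - t0)) * dist_E n (x t0)) with
    (sqrt (INR n) * ((exp g * exp (- (g / W) * (t - t0))) * (2 * dist_E n (x t0)))) by ring.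
  apply Rmult_le_compat_l; auto.
Qed.


Theorem theorem1 (n : nat) (A : R -> nat -> nat -> R)
  (Hbdd : bounded_mat n A)
  (Hpc : piecewise_continuous n A)
  (HM : forall t, metzler_zero_row_sums n (A t))
  (k : nat) (Hk : (k < n)%nat) (delta T : R) (Hdelta : 0 < delta) (HT : 0 < T)
  (Hreach : forall t : R, forall l, (l < n)%nat -> l <> k ->
       reachable n delta (int_mat A t T) k l) :
  unif_exp_stable_E n A /\
  (forall (t0 : R) (zeta : R -> nat -> R), is_solution_from n A t0 zeta ->
     exists v : R, forall i, (i < n)%nat ->
       filterlim (fun t => zeta t i) (Rbar_locally p_infty) (locally v)).
Proof.
  destruct Hbdd as [Mb HMb].
  assert (HL : 0 <= Mb) by (specialize (HMb 0 k k Hk Hk); assert (X := Rabs_pos (A 0 k k)); lra).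
  assert (HA : hypA n A Mb) by (split; [auto|split; auto]).
  assert (Hn : (0 < n)%nat) by lia.
  assert (HnR : 0 < INR n) by (apply lt_0_INR; auto).
  set (c := INR n * Mb).
  assert (Hc : 0 <= c) by (unfold c; nra).
  set (h0 := / (2 * (c + 1))).
  assert (Hh0 : 0 < h0) by (unfold h0; apply Rinv_0_lt_compat; lra).
  assert (Hh0' : c * h0 <= 1/2).
  { unfold h0. apply (Rmult_le_reg_r (2 * (c + 1))); [lra|].
    rewrite Rmult_assoc, Rinv_l by lra. lra. }
  destruct (arch_nat (T / h0)) as [NT HNT].
  assert (HNT' : T <= INR NT * h0).
  { apply (Rmult_lt_compat_r h0) in HNT; auto. unfold Rdiv in HNT.
    rewrite Rmult_assoc, Rinv_l in HNT by lra. lra. }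
  set (Dn := 1 + delta + c * T).
  assert (HDn : 1 <= Dn) by (unfold Dn; nra).
  set (r := delta / (2 * Dn)).
  assert (Hr : r * (2 * Dn) = delta) by (unfold r; field; lra).
  assert (Hcst : cst_ok n Mb delta T r h0 NT).
  { assert (0 < r) by (unfold r; apply Rdiv_lt_0_compat; lra).
    assert (0 <= c * T) by nra. assert (delta < Dn) by (unfold Dn; lra).
    unfold cst_ok. fold c. split; [auto|]. split.
    { apply (Rmult_le_reg_r (2 * Dn)); [lra|]. rewrite Hr. lra. }
    split.
    { apply (Rmult_le_reg_r (2 * Dn)); [lra|]. rewrite Hr. nra. }
    split; [|auto].
    assert (r * (delta + c * T) <= r * Dn) by (apply Rmult_le_compat_l; unfold Dn; lra). assert (r * Dn = delta / 2) by (rewrite <- Hr; field). lra. }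
  set (g := (1/2) * (r * (1/2) ^ NT * (1/2) ^ NT) ^ n).
  assert (Hg : 0 < g <= 1).
  { destruct Hcst as [Hr1 [Hr2 _]]. assert (0 < (1/2) ^ NT <= 1) by (split; [apply pow_lt; lra|apply pow_le1; lra]).
    assert (0 < r * (1/2) ^ NT * (1/2) ^ NT <= 1) by (split; [apply Rmult_lt_0_compat; [apply Rmult_lt_0_compat|]; lra| nra]).
    assert (0 < (r * (1/2) ^ NT * (1/2) ^ NT) ^ n <= 1) by (split; [apply pow_lt; lra|apply pow_le1; lra]).
    unfold g; lra. }
  set (W := INR n * T).
  assert (HW : 0 < W) by (unfold W; nra).
  assert (Hit : forall t0 zeta, is_solution_from n A t0 zeta -> iterP n zeta t0 g W).
  { intros t0 zeta Hz a m M Ha Hb q.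
    apply (iter_contr n A Mb t0 zeta k delta T r h0 NT a m M HA Hz Hpc Hcst HT Hdelta Hk Hreach Ha Hb q). }
  split.
  - exists (2 * sqrt (INR n) * exp g), (g / W). split.
    { assert (0 < sqrt (INR n)) by (apply sqrt_lt_R0; auto). assert (0 < exp g) by apply exp_pos.
      apply Rmult_lt_0_compat; [|auto]. lra. }
    split. apply Rdiv_lt_0_compat; lra.
    intros t0 zeta Hz t Ht. apply (stab_lemma n zeta t0 g W Hn Hg HW (Hit t0 zeta Hz) t Ht).
  - intros t0 zeta Hz. apply (conv_lemma n zeta t0 g W Hn Hg HW (Hit t0 zeta Hz)).
Qed.
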